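(* Let $p$ be a prime and $e\geq 2$ an integer. For each integer $r\geq 2$ let $S(p,e,r)$ be the smallest set of positive integers such that $r\in S$, $n\in S$ whenever $n^e\in S$, and $(n+p)^e\in S$ whenever $n\in S$. Let $V=\bigcup_{r\geq 2}S(p,e,r)$ and let $\Gamma(p,e)$ be the directed graph on $V$ with up-edges $(n,(n+p)^e)$ and down-edges $(n^e,n)$ for $n\in V$. Then no path in $\Gamma(p,e)$ contains $UUDD$ as a subpath; that is, there do not exist vertices $x,a,z,b,y\in V$ with $a=(x+p)^e$, $z=(a+p)^e$, $z=b^e$ and $b=y^e$.
   Context: Each edge of a path is labelled $U$ if it is an up-edge and $D$ if it is a down-edge; a path contains $UUDD$ as a subpath if it has four consecutive edges labelled $U,U,D,D$. *)

(* Defs.v *)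
From mathcomp Require Import all_boot.
Set Implicit Arguments. Unset Strict Implicit. Unset Printing Implicit Defensive.

Inductive S_set (p e r : nat) : nat -> Prop :=
  | S_base : S_set p e r r
  | S_root : forall n, 0 < n -> S_set p e r (n ^ e) -> S_set p e r n
  | S_up   : forall n, S_set p e r n -> S_set p e r ((n + p) ^ e).

Definition Vset (p e : nat) (n : nat) : Prop := exists2 r, 2 <= r & S_set p e r n.

(* Main.v *)
Require Import Defs.
From mathcomp Require Import all_boot.
From mathcomp Require Import zify.

Lemma key_ineq (c e : nat) : 2 <= e -> c ^ e + (c + 1) <= (c + 1) ^ e.
Proof.
case: e => [|e'] // he.
have h1 : c ^ e'.+1 <= c * (c + 1) ^ e'.
  by rewrite expnS leq_mul2l leq_exp2r ?addn1 ?leqnSn ?orbT.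
have h2 : c + 1 <= (c + 1) ^ e'.
  by rewrite -{1}(expn1 (c + 1)) leq_pexp2l ?addn1.
have -> : (c + 1) ^ e'.+1 = c * (c + 1) ^ e' + (c + 1) ^ e' by rewrite expnS mulnDl mul1n.
lia.
Qed.

Theorem theorem24 (p e : nat) (hp : prime p) (he : 2 <= e) :
  ~ (exists x a z b y : nat,
        [/\ Vset p e x, Vset p e a, Vset p e z, Vset p e b & Vset p e y] /\
        [/\ a = (x + p) ^ e, z = (a + p) ^ e, z = b ^ e & b = y ^ e]).
Proof.
move=> [x [a [z [b [y [_ [ha hz1 hz2 hb]]]]]]].
have e0 : 0 < e by apply: leq_trans he.
have hba : b = a + p.
  by apply/eqP; rewrite -(eqn_exp2r _ _ e0) -hz2 hz1.
set c := x + p in ha.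
have hp2 := prime_gt1 hp.
have hyc : y ^ e = c ^ e + p by rewrite -hb hba ha.
have lt1 : c ^ e < y ^ e by rewrite hyc; lia.
have hcy : c < y by rewrite -(ltn_exp2r _ _ e0).
have key := @key_ineq c e he.
have : (c + 1) ^ e <= y ^ e by rewrite leq_exp2r // addn1.
rewrite /c in key hyc *; lia.
Qed.
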